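(* For every $m\ge1$ and every $0\le s\le m$, $$\tilde G_s(m,\{\lambda_l\}|\{\xi_k\})=\frac{1}{\sin^m\zeta}\,Z_m(\{\lambda_l\}|\{\xi_k\}).$$ In particular $\tilde G_s$ does not depend on $s$, and equivalently $$G_s(m,\{\lambda\}|\{\xi\})=\frac{1}{s!(m-s)!\,\sin^m\zeta}\,\Theta^s_m(\lambda_1,\dots,\lambda_m)\,Z_m(\{\lambda\}|\{\xi\}).$$
   Context: Fix $\zeta\in(0,\pi)$. For integers $m\ge1$, $0\le s\le m$, set $\epsilon_j=-\tfrac12$ for $j\le s$ and $\epsilon_j=+\tfrac12$ for $j>s$ ($\epsilon_j$ attached to $\lambda_j$). Define $$G_s(m,\{\lambda_j\}|\{\xi_k\})=\frac{1}{s!(m-s)!}\sum_{\sigma\in S_m}(-1)^{[\sigma]}\prod_{1\le k<j\le m}\frac{\sinh(\lambda_{\sigma(j)}-\xi_k+i\epsilon_{\sigma(j)}\zeta)\,\sinh(\lambda_{\sigma(k)}-\xi_j-i\epsilon_{\sigma(k)}\zeta)}{\sinh(\lambda_{\sigma(j)}-\lambda_{\sigma(k)}+i(\epsilon_{\sigma(j)}+\epsilon_{\sigma(k)})\zeta)}$$ ($(-1)^{[\sigma]}$ the sign of $\sigma$), and $\tilde G_s$ by $$G_s=\frac{1}{s!(m-s)!}\prod_{1\le k<j\le m}\frac{\sinh(\lambda_j-\lambda_k)}{\sinh(\lambda_j-\lambda_k+i(\epsilon_j+\epsilon_k)\zeta)\,\sinh(\lambda_j-\lambda_k-i(\epsilon_j+\epsilon_k)\zeta)}\;\tilde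 G_s.$$ The (inhomogeneous six-vertex domain-wall) partition function is $$Z_m(\{\lambda\}|\{\xi\})=\frac{\prod_{j,k=1}^m\sinh(\lambda_j-\xi_k+i\frac\zeta2)\sinh(\lambda_j-\xi_k-i\frac\zeta2)}{\prod_{1\le k<j\le m}\sinh(\lambda_j-\lambda_k)\sinh(\xi_k-\xi_j)}\det_m\mathcal M,\qquad \mathcal M_{jk}=\frac{\sin\zeta}{\sinh(\lambda_j-\xi_k+i\frac\zeta2)\sinh(\lambda_j-\xi_k-i\frac\zeta2)},$$ and $$\Theta^s_m(\lambda_1,\dots,\lambda_m)=\prod_{k=1}^s\prod_{j=s+1}^m\frac1{\sinh(\lambda_j-\lambda_k)}\prod_{m\ge j>k>s}\frac{\sinh(\lambda_j-\lambda_k)}{\sinh(\lambda_j-\lambda_k+i\zeta)\sinh(\lambda_j-\lambda_k-i\zeta)}\prod_{s\ge j>k\ge1}\frac{\sinh(\lambda_j-\lambda_k)}{\sinh(\lambda_j-\lambda_k+i\zeta)\sinh(\lambda_j-\lambda_k-i\zeta)}.$$ All identities are between meromorphic functions. *)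

(* Defs.v *)
From HB Require Import structures.
From mathcomp Require Import all_boot all_order all_algebra all_fingroup.
From mathcomp Require Import complex.
From mathcomp Require Import reals sequences exp trigo.
Set Implicit Arguments. Unset Strict Implicit. Unset Printing Implicit Defensive.
Import Order.TTheory GRing.Theory Num.Theory.
Local Open Scope ring_scope.
Local Open Scope complex_scope.

Section Defs.
Variable R : realType.
Local Notation C := (R[i]).

Definition cexp (z : C) : C :=
  let: a +i* b := z in (expR a * cos b) +i* (expR a * sin b).

Definition csinh (z : C) : C := (cexp z - cexp (- z)) / 2%:R.

Definition imag (t : R) : C := 0 +i* t.

(* epsilon_j (0-indexed j): -1/2 for j < s (i.e. 1-indexed j <= s), +1/2 otherwise *)
Definition eps (s : nat) {m : nat} (j : 'I_m) : R :=
  if (j < s)%N then - (1 / 2%:R) else 1 / 2%:R.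

Definition Gfun (zeta : R) (m s : nat) (lam xi : 'I_m -> C) : C :=
  ((s`! * (m - s)`!)%:R)^-1 *
  \sum_(sg : 'S_m) (-1) ^+ (odd_perm sg) *
    \prod_(k : 'I_m) \prod_(j : 'I_m | (k < j)%N)
      (csinh (lam (sg j) - xi k + imag (eps s (sg j) * zeta)) *
       csinh (lam (sg k) - xi j - imag (eps s (sg k) * zeta)) /
       csinh (lam (sg j) - lam (sg k) + imag ((eps s (sg j) + eps s (sg k)) * zeta))).

Definition Gpref (zeta : R) (m s : nat) (lam : 'I_m -> C) : C :=
  ((s`! * (m - s)`!)%:R)^-1 *
  \prod_(k : 'I_m) \prod_(j : 'I_m | (k < j)%N)
    (csinh (lam j - lam k) /
     (csinh (lam j - lam k + imag ((eps s j + eps s k) * zeta)) *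
      csinh (lam j - lam k - imag ((eps s j + eps s k) * zeta)))).

(* tilde G_s, determined by G_s = Gpref * tilde G_s (Gpref is nonzero at generic points) *)
Definition Gtilde (zeta : R) (m s : nat) (lam xi : 'I_m -> C) : C :=
  Gfun zeta s lam xi / Gpref zeta s lam.

Definition Mmat (zeta : R) (m : nat) (lam xi : 'I_m -> C) : 'M[C]_m :=
  \matrix_(j, k) ((sin zeta)%:C /
     (csinh (lam j - xi k + imag (zeta / 2%:R)) *
      csinh (lam j - xi k - imag (zeta / 2%:R)))).

Definition Zfun (zeta : R) (m : nat) (lam xi : 'I_m -> C) : C :=
  (\prod_(j : 'I_m) \prod_(k : 'I_m)
      (csinh (lam j - xi k + imag (zeta / 2%:R)) *
       csinh (lam j - xi k - imag (zeta / 2%:R)))) /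
  (\prod_(k : 'I_m) \prod_(j : 'I_m | (k < j)%N)
      (csinh (lam j - lam k) * csinh (xi k - xi j))) *
  \det (Mmat zeta lam xi).

Definition Theta (zeta : R) (m s : nat) (lam : 'I_m -> C) : C :=
  (\prod_(k : 'I_m | (k < s)%N) \prod_(j : 'I_m | (s <= j)%N)
      (csinh (lam j - lam k))^-1) *
  (\prod_(k : 'I_m | (s <= k)%N) \prod_(j : 'I_m | (k < j)%N)
      (csinh (lam j - lam k) /
       (csinh (lam j - lam k + imag zeta) * csinh (lam j - lam k - imag zeta)))) *
  (\prod_(k : 'I_m) \prod_(j : 'I_m | (k < j)%N && (j < s)%N)
      (csinh (lam j - lam k) /
       (csinh (lam j - lam k + imag zeta) * csinh (lam j - lam k - imag zeta)))).

End Defs.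

(* Main.v *)
Require Import Defs.
From HB Require Import structures.
From mathcomp Require Import all_boot all_order all_algebra all_fingroup.
From mathcomp Require Import complex.
From mathcomp Require Import reals sequences exp trigo.
From mathcomp Require Import ring.
From mathcomp Require boolp.
Import Order.TTheory GRing.Theory Num.Theory.
Set Implicit Arguments. Unset Strict Implicit.
Local Open Scope ring_scope.
Local Open Scope complex_scope.
Section S.
Variable R : realType.
Local Notation C := (R[i]).
Lemma cexpD (a b : C) : cexp (a + b) = cexp a * cexp b.
Proof.
case: a => a1 a2; case: b => b1 b2; rewrite /cexp /=.
rewrite expRD cosD sinD; apply/eqP; rewrite eq_complex /=; apply/andP; split; apply/eqP; ring.
Qed.
Lemma cexp0 : cexp 0 = 1 :> C.
Proof. by rewrite /cexp /= expR0 cos0 sin0 !mul1r. Qed.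
Lemma cexp_neq0 (a : C) : cexp a != 0.
Proof.
apply/negP => /eqP h. have := cexpD a (-a). rewrite subrr cexp0 h mul0r.
by move/eqP; rewrite oner_eq0.
Qed.
Lemma cexpN (a : C) : cexp (- a) = (cexp a)^-1.
Proof.
apply: (mulfI (cexp_neq0 a)). by rewrite -cexpD subrr cexp0 divff // cexp_neq0.
Qed.
Lemma cexpB (a b : C) : cexp (a - b) = cexp a / cexp b.
Proof. by rewrite cexpD cexpN. Qed.
Lemma csinh0 : csinh 0 = 0 :> C.
Proof. by rewrite /csinh oppr0 subrr mul0r. Qed.
Lemma csinhN (a : C) : csinh (- a) = - csinh a.
Proof. by rewrite /csinh opprK -mulNr opprB. Qed.
Lemma csinh_sub (a x : C) :
  csinh (a - x) = (cexp x)^-1 * (cexp a / 2%:R - (cexp a)^-1 / 2%:R * cexp x ^+ 2).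
Proof.
rewrite /csinh opprB !cexpB. have := cexp_neq0 x; have := cexp_neq0 a.
move=> ha hx. field. by rewrite ha hx.
Qed.
Lemma csinh_sq (a b : C) : csinh (a - b) != 0 -> cexp a ^+ 2 != cexp b ^+ 2.
Proof.
apply: contra => /eqP h. rewrite /csinh opprB !cexpB.
have ha := cexp_neq0 a; have hb := cexp_neq0 b.
apply/eqP; apply: (mulfI (mulf_neq0 ha hb)). rewrite mulr0.
rewrite mulrA mulrBr. 
have -> : cexp a * cexp b * (cexp a / cexp b) = cexp a ^+ 2 by field.
have -> : cexp a * cexp b * (cexp b / cexp a) = cexp b ^+ 2 by field.
by rewrite h subrr mul0r.
Qed.

(* trigonometric polynomials of degree n in x *)
Definition tp (n : nat) (f : C -> C) :=
  exists p : {poly C}, (size p <= n.+1)%N /\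
     forall x, f x = (cexp x ^+ n)^-1 * p.[cexp x ^+ 2].

Lemma tp_ext n f g : (forall x, f x = g x) -> tp n f -> tp n g.
Proof. by move=> e [p [hp hf]]; exists p; split=> // x; rewrite -e. Qed.
Lemma tp_eqn n k f : n = k -> tp n f -> tp k f.
Proof. by move=> ->. Qed.
Lemma tp_const c : tp 0 (fun _ => c).
Proof.
exists c%:P; split; first exact: size_polyC_leq1.
by move=> x; rewrite hornerC expr0 invr1 mul1r.
Qed.
Lemma tp_sinh a : tp 1 (fun x => csinh (a - x)).
Proof.
exists ((cexp a / 2%:R)%:P + (- ((cexp a)^-1 / 2%:R)) *: 'X); split.
  apply: (leq_trans (size_polyD _ _)); rewrite geq_max.
  rewrite (leq_trans (size_polyC_leq1 _)) //=.
  by rewrite (leq_trans (size_scale_leq _ _)) // size_polyX.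
move=> x; rewrite csinh_sub hornerD hornerC hornerZ hornerX expr1.
by rewrite mulNr.
Qed.
Lemma tp_mul n k f g : tp n f -> tp k g -> tp (n + k) (fun x => f x * g x).
Proof.
move=> [p [hp hf]] [q [hq hg]]; exists (p * q); split.
  apply: (leq_trans (size_mul_leq _ _)).
  by rewrite -subn1 leq_subLR add1n -addnS -addSn leq_add.
by move=> x; rewrite hf hg hornerM exprD invfM; ring.
Qed.
Lemma tp_add n f g : tp n f -> tp n g -> tp n (fun x => f x + g x).
Proof.
move=> [p [hp hf]] [q [hq hg]]; exists (p + q); split.
  by apply: (leq_trans (size_polyD _ _)); rewrite geq_max hp hq.
by move=> x; rewrite hf hg hornerD mulrDr.
Qed.
Lemma tp_scale n c f : tp n f -> tp n (fun x => c * f x).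
Proof.
move=> [p [hp hf]]; exists (c *: p); split.
  exact: (leq_trans (size_scale_leq _ _)).
by move=> x; rewrite hf hornerZ; ring.
Qed.
Lemma tp_opp n f : tp n f -> tp n (fun x => - f x).
Proof. move=> h; apply: (tp_ext _ (@tp_scale n (-1) f h)) => x; by rewrite mulN1r. Qed.
Lemma tp_sub n f g : tp n f -> tp n g -> tp n (fun x => f x - g x).
Proof. by move=> hf hg; apply: tp_add => //; apply: tp_opp. Qed.
Lemma tp_zero0 : tp 0 (fun _ => 0).
Proof. exact: tp_const. Qed.

Lemma tp_sum (I : Type) (r : seq I) (P : pred I) n (F : I -> C -> C) :
  (forall i, P i -> tp n (F i)) -> tp n (fun x => \sum_(i <- r | P i) F i x).
Proof.
move=> h; elim: r => [|i r IH].
  apply: (tp_ext _ (n:=n) (f := fun _ => 0)) => [x|]; first by rewrite big_nil.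
  exists 0; split => [|x]; by rewrite ?size_poly0 ?horner0 ?mulr0.
case Pi: (P i).
  by apply: (tp_ext _ (tp_add (h i Pi) IH)) => x; rewrite big_cons Pi.
by apply: (tp_ext _ IH) => x; rewrite big_cons Pi.
Qed.
Lemma tp_prod (I : Type) (r : seq I) (P : pred I) (d : I -> nat) (F : I -> C -> C) :
  (forall i, P i -> tp (d i) (F i)) ->
  tp (\sum_(i <- r | P i) d i) (fun x => \prod_(i <- r | P i) F i x).
Proof.
move=> h; elim: r => [|i r IH].
  by rewrite big_nil; apply: (tp_ext _ (tp_const 1)) => x; rewrite big_nil.
rewrite big_cons; case Pi: (P i).
  by apply: (tp_ext _ (tp_mul (h i Pi) IH)) => x; rewrite big_cons Pi.
by apply: (tp_ext _ IH) => x; rewrite big_cons Pi.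
Qed.

Lemma tp_roots n f (zs : seq C) :
  tp n f -> size zs = n.+1 -> uniq [seq cexp z ^+ 2 | z <- zs] ->
  (forall z, z \in zs -> f z = 0) -> forall x, f x = 0.
Proof.
move=> [p [hp hf]] hs hu hz.
suff p0 : p = 0 by move=> x; rewrite hf p0 horner0 mulr0.
apply: (roots_geq_poly_eq0 (rs := [seq cexp z ^+ 2 | z <- zs])) => //.
  apply/allP => y /mapP [z zin ->]; rewrite /root; apply/eqP.
  have := hz z zin; rewrite hf => /eqP; rewrite mulf_eq0 invr_eq0 expf_eq0.
  by rewrite (negPf (cexp_neq0 z)) andbF /= => /eqP.
by rewrite size_map hs.
Qed.
End S.

Set Implicit Arguments. Unset Strict Implicit.
Import Order.TTheory GRing.Theory Num.Theory.
Local Open Scope ring_scope.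
Section S.
Variable R : comRingType.

Lemma sum_lift_perm n (F : 'S_n.+1 -> R) i j :
  \sum_(s : 'S_n.+1 | s i == j) F s = \sum_(t : 'S_n) F (lift_perm i j t).
Proof.
rewrite (reindex (lift_perm i j)); last first.
  pose ulsf i (s : 'S_n.+1) k := odflt k (unlift (s i) (s (lift i k))).
  have ulsfK i' (s : 'S_n.+1) k: lift (s i') (ulsf i' s k) = s (lift i' k).
    rewrite /ulsf; have:= neq_lift i' k.
    by rewrite -(can_eq (permK s)) => /unlift_some[] ? ? ->.
  have inj_ulsf: injective (ulsf i _).
    move=> s; apply: can_inj (ulsf (s i) s^-1%g) _ => k'.
    by rewrite {1}/ulsf ulsfK !permK liftK.
  exists (fun s => perm (inj_ulsf s)) => [s _ | s].
    by apply/permP=> k'; rewrite permE /ulsf lift_perm_lift lift_perm_id liftK.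
  move/(s _ =P _) => si0; apply/permP=> k.
  case: (unliftP i k) => [k'|] ->; rewrite ?lift_perm_id //.
  by rewrite lift_perm_lift -si0 permE ulsfK.
by apply: eq_bigl => s; rewrite lift_perm_id eqxx.
Qed.

Definition psw n (s : 'S_n) (p : 'I_n * 'I_n) : 'I_n * 'I_n :=
  if (p.1 < p.2)%N == (s p.1 < s p.2)%N then (s p.1, s p.2) else (s p.2, s p.1).

Lemma psw_neq n (s : 'S_n) (a b : 'I_n) :
  ((a < b)%N == (s a < s b)%N) = false -> a != b.
Proof. by move=> h; apply/eqP => e; rewrite e !ltnn in h. Qed.

Lemma pswK n (s : 'S_n) : cancel (psw s) (psw (s^-1)%g).
Proof.
move=> [a b]; rewrite /psw /=.
case E: ((a < b)%N == (s a < s b)%N) => /=.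
  by rewrite !permK eq_sym E.
have nab := psw_neq E.
have nsab : s a != s b by rewrite (inj_eq perm_inj).
have E' : ((s b < s a)%N == (b < a)%N) = false.
  move: E nab nsab; rewrite -!(inj_eq val_inj) /=.
  case: (ltngtP a b); case: (ltngtP (s a) (s b)) => //.
by rewrite !permK E'.
Qed.

Lemma pair_prod_perm n (g : 'I_n -> 'I_n -> R) (s : 'S_n) :
  (forall a b, g a b = g b a) ->
  \prod_(k : 'I_n) \prod_(j : 'I_n | (k < j)%N) g (s j) (s k) =
  \prod_(k : 'I_n) \prod_(j : 'I_n | (k < j)%N) g j k.
Proof.
move=> gs; rewrite !pair_big_dep /=.
rewrite [RHS](reindex_inj (can_inj (pswK s))) /=.
apply: eq_big => [[a b]|[a b]] /=; rewrite /psw /=.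
  case E: ((a < b)%N == (s a < s b)%N); first by move/eqP: E.
  have nab := psw_neq E.
  move: E nab; rewrite -!(inj_eq val_inj) /=.
  case: (ltngtP a b); case: (ltngtP (s a) (s b)) => //.
  by move=> e; move: (perm_inj (val_inj e)) => ->; rewrite ltnn.
case E: ((a < b)%N == (s a < s b)%N) => //= _; exact: gs.
Qed.

Lemma prod_lift n (G : 'I_n.+1 -> R) (b : 'I_n.+1) :
  \prod_(l : 'I_n.+1) G l = G b * \prod_(l : 'I_n) G (lift b l).
Proof. by rewrite (bigD1_ord b) //. Qed.

Lemma prod_lift_neq n (G : 'I_n.+1 -> R) (b : 'I_n.+1) (i : 'I_n) :
  \prod_(l : 'I_n.+1 | l != lift b i) G l = G b * \prod_(l : 'I_n | l != i) G (lift b l).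
Proof.
rewrite (bigD1_ord b) /=; last by rewrite neq_lift.
by congr (_ * _); apply: eq_bigl => l; rewrite (inj_eq lift_inj).
Qed.

Lemma prod_neq_lift n (G : 'I_n.+1 -> R) (b : 'I_n.+1) :
  \prod_(l : 'I_n.+1 | l != b) G l = \prod_(l : 'I_n) G (lift b l).
Proof.
rewrite (reindex_omap (lift b) (unlift b))/=.
  by apply: eq_bigl => l; rewrite liftK eq_sym neq_lift eqxx.
by move=> i; case: unliftP => [k ->|->]; rewrite ?eqxx.
Qed.

Lemma lift_max_lt m (k j : 'I_m) : (lift ord_max k < lift ord_max j)%N = (k < j)%N.
Proof. by rewrite !lift_max. Qed.

Lemma pair_split m (H : 'I_m.+1 -> 'I_m.+1 -> R) :
  \prod_(k : 'I_m.+1) \prod_(j : 'I_m.+1 | (k < j)%N) H k j =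
  \prod_(k : 'I_m) H (lift ord_max k) ord_max *
  \prod_(k : 'I_m) \prod_(j : 'I_m | (k < j)%N) H (lift ord_max k) (lift ord_max j).
Proof.
rewrite (prod_lift _ ord_max) big_pred0; last first.
  by move=> j /=; rewrite ltnNge -ltnS ltn_ord.
rewrite mul1r -big_split /=; apply: eq_bigr => k _.
rewrite (bigD1_ord ord_max) /=; last by rewrite /bump (leqNgt m k) (ltn_ord k) /= (ltn_ord k).
by congr (_ * _); apply: eq_bigl => j; rewrite /bump (leqNgt m k) (leqNgt m j) (ltn_ord k) (ltn_ord j).
Qed.
End S.

Set Implicit Arguments. Unset Strict Implicit.
Import Order.TTheory GRing.Theory Num.Theory.
Local Open Scope ring_scope.
Local Open Scope complex_scope.
Section S.
Variable R : realType.
Local Notation C := (R[i]).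

Definition Nf m (mu nu xi : 'I_m -> C) : C :=
  \sum_(s : 'S_m) (-1) ^+ s *
    \prod_(k : 'I_m) \prod_(j : 'I_m | (k < j)%N)
      (csinh (mu (s j) - xi k) * csinh (nu (s k) - xi j) * csinh (nu (s j) - mu (s k))).
Definition Vf m (xi : 'I_m -> C) : C :=
  \prod_(k : 'I_m) \prod_(j : 'I_m | (k < j)%N) csinh (xi k - xi j).
Definition Dmat m (mu nu xi : 'I_m -> C) : 'M[C]_m :=
  \matrix_(j, k) \prod_(l : 'I_m | l != j) (csinh (mu l - xi k) * csinh (nu l - xi k)).
Definition Hyp m (nu xi : 'I_m -> C) :=
  [/\ forall a b, a != b -> csinh (nu a - nu b) != 0,
      forall a k, csinh (nu a - xi k) != 0 &
      forall a b, a != b -> csinh (xi a - xi b) != 0].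
Definition upd m (xi : 'I_m.+1 -> C) (x : C) : 'I_m.+1 -> C :=
  fun k => if k == ord_max then x else xi k.

Lemma upd_max m (xi : 'I_m.+1 -> C) x : upd xi x ord_max = x.
Proof. by rewrite /upd eqxx. Qed.
Lemma upd_lift m (xi : 'I_m.+1 -> C) x k : upd xi x (lift ord_max k) = xi (lift ord_max k).
Proof. by rewrite /upd eq_sym (negPf (neq_lift _ _)). Qed.
Lemma lt_neq_max m (k j : 'I_m.+1) : (k < j)%N -> k != ord_max.
Proof.
move=> h; apply/eqP => e; move: h; rewrite e /=.
by rewrite ltnNge -ltnS ltn_ord.
Qed.
Lemma upd_lt m (xi : 'I_m.+1 -> C) x (k j : 'I_m.+1) : (k < j)%N -> upd xi x k = xi k.
Proof. by move=> h; rewrite /upd (negPf (lt_neq_max h)). Qed.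

Lemma count_max m :
  (\sum_(k : 'I_m.+1) \sum_(j : 'I_m.+1 | (k < j)%N) (j == ord_max : nat))%N = m.
Proof.
transitivity (\sum_(k : 'I_m.+1) (k != ord_max : nat))%N.
  apply: eq_bigr => k _; rewrite big_mkcond (bigD1 ord_max) //= big1 ?addn0.
    have [->|ne] := eqVneq k ord_max; first by rewrite ltnn.
    have: (k < m)%N.
      by rewrite ltn_neqAle -ltnS ltn_ord andbT; apply: contra ne => /eqP e; apply/eqP/val_inj.
    by move=> ->; rewrite eqxx.
  by move=> j /negPf ->; case: ifP.
rewrite big_ord_recr /= eqxx addn0.
rewrite (eq_bigr (fun _ => 1%N)); first by rewrite sum1_card card_ord.
move=> k _; have: (widen_ord (leqnSn m) k != ord_max) by rewrite -(inj_eq val_inj) /= neq_ltn ltn_ord.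
by move=> ->.
Qed.

Lemma tp_pairs m (H : C -> 'I_m.+1 -> 'I_m.+1 -> C) :
  (forall k j : 'I_m.+1, (k < j)%N -> tp (j == ord_max) (fun x => H x k j)) ->
  tp m (fun x => \prod_(k : 'I_m.+1) \prod_(j : 'I_m.+1 | (k < j)%N) H x k j).
Proof.
move=> h; apply: (tp_eqn (count_max m)).
apply: (@tp_prod _ _ _ _ _ (fun (k : 'I_m.+1) (x : C) => \prod_(j : 'I_m.+1 | (k < j)%N) H x k j)) => k _.
by apply: (@tp_prod _ _ _ _ _ (fun (j : 'I_m.+1) (x : C) => H x k j)) => j kj; apply: h.
Qed.

Lemma tp_N m (mu nu xi : 'I_m.+1 -> C) : tp m (fun x => Nf mu nu (upd xi x)).
Proof.
apply: (@tp_sum _ _ _ _ _ (fun (s : 'S_m.+1) (x : C) => (-1) ^+ s * \prod_(k : 'I_m.+1) \prod_(j : 'I_m.+1 | (k < j)%N)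
      (csinh (mu (s j) - upd xi x k) * csinh (nu (s k) - upd xi x j) * csinh (nu (s j) - mu (s k))))) => s _.
apply: tp_scale; apply: tp_pairs => k j kj.
have [e|ne] := eqVneq j ord_max.
  apply: (tp_ext (f := fun x => csinh (mu (s ord_max) - xi k) * csinh (nu (s k) - x) * csinh (nu (s ord_max) - mu (s k)))).
    by move=> x /=; rewrite (upd_lt _ _ kj) e upd_max.
  idtac.
  apply: (tp_eqn (n := 0 + 1 + 0)) => //; apply: tp_mul; first apply: tp_mul.
  - exact: tp_const.
  - exact: tp_sinh.
  - exact: tp_const.
apply: (tp_ext (f := fun x => csinh (mu (s j) - xi k) * csinh (nu (s k) - xi j) * csinh (nu (s j) - mu (s k)))).
  by move=> x /=; rewrite (upd_lt _ _ kj) /upd (negPf ne).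
exact: tp_const.
Qed.

Lemma tp_V m (xi : 'I_m.+1 -> C) : tp m (fun x => Vf (upd xi x)).
Proof.
apply: tp_pairs => k j kj.
have [e|ne] := eqVneq j ord_max.
  apply: (tp_ext (f := fun x => csinh (xi k - x))); first by move=> x /=; rewrite (upd_lt _ _ kj) e upd_max.
  exact: tp_sinh.
apply: (tp_ext (f := fun x => csinh (xi k - xi j))); first by move=> x /=; rewrite (upd_lt _ _ kj) /upd (negPf ne).
exact: tp_const.
Qed.

Lemma cofactor_upd m (mu nu xi : 'I_m.+1 -> C) x i :
  cofactor (Dmat mu nu (upd xi x)) i ord_max = cofactor (Dmat mu nu xi) i ord_max.
Proof.
rewrite /cofactor; congr (_ * \det _); apply/matrixP => a b; rewrite !mxE.
by apply: eq_bigr => l _; rewrite upd_lift.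
Qed.

Lemma tp_D m (mu nu xi : 'I_m.+1 -> C) : tp (m + m) (fun x => \det (Dmat mu nu (upd xi x))).
Proof.
apply: (tp_ext (f := fun x => \sum_i ((\prod_(l : 'I_m.+1 | l != i) (csinh (mu l - x) * csinh (nu l - x))) *
    cofactor (Dmat mu nu xi) i ord_max))).
  by move=> x; rewrite (expand_det_col _ ord_max); apply: eq_bigr => i _; rewrite cofactor_upd mxE upd_max.
apply: tp_sum => i _.
apply: (tp_ext (f := fun x => cofactor (Dmat mu nu xi) i ord_max *
   \prod_(l : 'I_m.+1 | l != i) (csinh (mu l - x) * csinh (nu l - x)))); first by move=> x; rewrite mulrC.
apply: tp_scale.
have -> : (m + m = \sum_(l : 'I_m.+1 | l != i) 2)%N.
  rewrite sum_nat_const cardC1 card_ord /=; by rewrite muln2 -addnn.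
apply: (@tp_prod _ _ _ _ _ (fun (l : 'I_m.+1) (x : C) => csinh (mu l - x) * csinh (nu l - x))) => l _.
by apply: (tp_eqn (n := 1 + 1)) => //; apply: tp_mul; apply: tp_sinh.
Qed.

Lemma V_node m (xi : 'I_m.+1 -> C) (k : 'I_m) : Vf (upd xi (xi (lift ord_max k))) = 0.
Proof.
apply/eqP/prodf_eq0; exists (lift ord_max k) => //.
apply/prodf_eq0; exists ord_max; first by rewrite lift_max ltn_ord.
by rewrite upd_lift upd_max subrr csinh0 eqxx.
Qed.

Lemma D_node m (mu nu xi : 'I_m.+1 -> C) (k : 'I_m) :
  \det (Dmat mu nu (upd xi (xi (lift ord_max k)))) = 0.
Proof.
rewrite -det_tr (@determinant_alternate _ _ _ (lift ord_max k) ord_max) //.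
  by rewrite eq_sym neq_lift.
by move=> j; rewrite !mxE upd_lift upd_max.
Qed.

Lemma V_split m (xi : 'I_m.+1 -> C) x :
  Vf (upd xi x) = \prod_(k : 'I_m) csinh (xi (lift ord_max k) - x) * Vf (fun k => xi (lift ord_max k)).
Proof.
rewrite /Vf pair_split; congr (_ * _).
  by apply: eq_bigr => k _; rewrite upd_lift upd_max.
by apply: eq_bigr => k _; apply: eq_bigr => j _; rewrite !upd_lift.
Qed.

Lemma D_nu m (mu nu xi : 'I_m.+1 -> C) (b : 'I_m.+1) :
  \det (Dmat mu nu (upd xi (nu b))) =
  \prod_(c : 'I_m) (csinh (mu (lift b c) - nu b) * csinh (nu (lift b c) - nu b)) *
  ((-1) ^+ (b + m) * (\det (Dmat (fun c => mu (lift b c)) (fun c => nu (lift b c)) (fun k => xi (lift ord_max k))) *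
   \prod_(k : 'I_m) (csinh (mu b - xi (lift ord_max k)) * csinh (nu b - xi (lift ord_max k))))).
Proof.
rewrite (expand_det_col _ ord_max) (bigD1 b) //= big1 ?addr0; last first.
  move=> i ib; apply/eqP; rewrite mulf_eq0; apply/orP; left.
  rewrite mxE; apply/prodf_eq0; exists b; first by rewrite eq_sym.
  by rewrite upd_max subrr csinh0 mulr0.
rewrite mxE upd_max prod_neq_lift; congr (_ * _).
rewrite /cofactor /=; congr (_ * _).
set d := \row_(k < m) (csinh (mu b - xi (lift ord_max k)) * csinh (nu b - xi (lift ord_max k))).
have -> : row' b (col' ord_max (Dmat mu nu (upd xi (nu b)))) =
   Dmat (fun c => mu (lift b c)) (fun c => nu (lift b c)) (fun k => xi (lift ord_max k)) *m diag_mx d.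
  apply/matrixP => i k; rewrite mul_mx_diag !mxE prod_lift_neq upd_lift mulrC; congr (_ * _).
rewrite det_mulmx det_diag; congr (_ * _); apply: eq_bigr => k _; by rewrite mxE.
Qed.

Lemma neq_max_lt m (k : 'I_m.+1) : k != ord_max -> (k < @ord_max m)%N.
Proof.
move=> h; rewrite ltn_neqAle -ltnS ltn_ord andbT; move: h; apply: contra => /eqP e.
by apply/eqP/val_inj.
Qed.

Lemma N_node m (mu nu xi : 'I_m.+1 -> C) (b : 'I_m.+1) :
  Nf mu nu (upd xi (nu b)) =
  (-1) ^+ (odd m (+) odd b) * \prod_(k : 'I_m) csinh (mu b - xi (lift ord_max k)) *
  \prod_(c : 'I_m) (csinh (nu (lift b c) - nu b) * csinh (nu b - mu (lift b c))) *
  Nf (fun c => mu (lift b c)) (fun c => nu (lift b c)) (fun k => xi (lift ord_max k)).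
Proof.
rewrite /Nf (bigID (fun s : 'S_m.+1 => s ord_max == b)) /= [X in _ + X]big1 ?addr0; last first.
  move=> s sb; apply/eqP; rewrite mulf_eq0; apply/orP; right.
  have hk : (s^-1 b)%g != ord_max by apply: contra sb => /eqP <-; rewrite permKV.
  apply/prodf_eq0; exists (s^-1 b)%g => //.
  apply/prodf_eq0; exists ord_max; first exact: neq_max_lt.
  by rewrite permKV upd_max subrr csinh0 mulr0 mul0r.
rewrite sum_lift_perm big_distrr /=; apply: eq_bigr => t _.
rewrite odd_lift_perm /= pair_split.
have E1 : \prod_(k : 'I_m)
    (csinh (mu (lift_perm ord_max b t ord_max) - upd xi (nu b) (lift ord_max k)) *
     csinh (nu (lift_perm ord_max b t (lift ord_max k)) - upd xi (nu b) ord_max) *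
     csinh (nu (lift_perm ord_max b t ord_max) - mu (lift_perm ord_max b t (lift ord_max k)))) =
   \prod_(k : 'I_m) csinh (mu b - xi (lift ord_max k)) *
   \prod_(c : 'I_m) (csinh (nu (lift b c) - nu b) * csinh (nu b - mu (lift b c))).
  rewrite [X in _ = _ * X](reindex_perm t) -big_split /=; apply: eq_bigr => k _.
  by rewrite lift_perm_id lift_perm_lift upd_lift upd_max -mulrA.
have E2 : \prod_(k : 'I_m) \prod_(j : 'I_m | (k < j)%N)
    (csinh (mu (lift_perm ord_max b t (lift ord_max j)) - upd xi (nu b) (lift ord_max k)) *
     csinh (nu (lift_perm ord_max b t (lift ord_max k)) - upd xi (nu b) (lift ord_max j)) *
     csinh (nu (lift_perm ord_max b t (lift ord_max j)) - mu (lift_perm ord_max b t (lift ord_max k)))) =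
   \prod_(k : 'I_m) \prod_(j : 'I_m | (k < j)%N)
    (csinh (mu (lift b (t j)) - xi (lift ord_max k)) *
     csinh (nu (lift b (t k)) - xi (lift ord_max j)) *
     csinh (nu (lift b (t j)) - mu (lift b (t k)))).
  by apply: eq_bigr => k _; apply: eq_bigr => j _; rewrite !lift_perm_lift !upd_lift.
rewrite E1 E2 (signr_addb _ (odd m (+) odd b) (odd_perm t)).
set S1 := (-1) ^+ (odd m (+) odd b); set S2 := (-1) ^+ (odd_perm t).
set A := \prod_(k : 'I_m) _; set B := \prod_(c : 'I_m) _; set P := \prod_(k : 'I_m) _.
by rewrite -!mulrA; congr (_ * _); rewrite mulrCA; congr (_ * _); rewrite mulrCA.
Qed.

Lemma prodNo n (F : 'I_n -> C) : \prod_(i < n) - F i = (-1) ^+ n * \prod_(i < n) F i.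
Proof.
elim: n F => [|n IH] F; first by rewrite !big_ord0 mul1r.
by rewrite !big_ord_recr /= IH exprSr mulrN1 mulrN mulNr mulrA.
Qed.

Lemma sign_sq m : (-1) ^+ m * (-1) ^+ m = 1 :> C.
Proof. by rewrite -exprD addnn -mul2n exprM sqrrN expr1n expr1n. Qed.

Lemma Hyp_lift m (nu xi : 'I_m.+1 -> C) (b : 'I_m.+1) : Hyp nu xi ->
  Hyp (fun c => nu (lift b c)) (fun k => xi (lift ord_max k)).
Proof.
case=> h1 h2 h3; split.
- by move=> a c ac; apply: h1; rewrite (inj_eq lift_inj).
- by move=> a k; apply: h2.
- by move=> a c ac; apply: h3; rewrite (inj_eq lift_inj).
Qed.

Lemma core m (mu nu xi : 'I_m -> C) : Hyp nu xi -> Nf mu nu xi * Vf xi = \det (Dmat mu nu xi).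
Proof.
elim: m mu nu xi => [|m IH] mu nu xi hyp.
  rewrite det_mx00 /Nf /Vf big_ord0 mulr1 (big_pred1 1%g); last first.
    by move=> s; apply/esym/eqP/permP => i; case: i.
  by rewrite odd_perm1 expr0 mul1r big_ord0.
pose f x := Nf mu nu (upd xi x) * Vf (upd xi x) - \det (Dmat mu nu (upd xi x)).
have tpf : tp (m + m) f by apply: tp_sub; [apply: tp_mul; [apply: tp_N | apply: tp_V] | apply: tp_D].
case: (hyp) => h1 h2 h3.
have H0 : forall x, f x = 0.
{   apply: (tp_roots (zs := [seq nu b | b <- ord_enum m.+1] ++ [seq xi (lift ord_max k) | k <- ord_enum m]) tpf).
- by rewrite size_cat !size_map -!(size_map val) !val_ord_enum !size_iota addSn.
- rewrite map_cat cat_uniq -!map_comp; apply/and3P; split.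
  + rewrite map_inj_uniq ?ord_enum_uniq // => a c /= e; apply/eqP/negPn/negP => ne.
    by move: (csinh_sq (h1 _ _ ne)); rewrite e eqxx.
  + apply/hasPn => y /mapP [k _ ->] /=; apply/negP => /mapP [c _ /= e].
    by move: (csinh_sq (h2 c (lift ord_max k))); rewrite e eqxx.
  + rewrite map_inj_uniq ?ord_enum_uniq // => a c /= e; apply/eqP/negPn/negP => ne.
    have ne' : lift ord_max a != lift ord_max c by rewrite (inj_eq lift_inj).
    by move: (csinh_sq (h3 _ _ ne')); rewrite e eqxx.
- move=> z; rewrite mem_cat => /orP [] /mapP [b _ ->]; last first.
    by rewrite /f V_node D_node mulr0 subrr.
rewrite /f N_node V_split D_nu -(IH _ _ _ (Hyp_lift b hyp)).
set N' := Nf _ _ _; set V' := Vf _.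
have EB : \prod_(c : 'I_m) (csinh (nu (lift b c) - nu b) * csinh (nu b - mu (lift b c))) =
   (-1) ^+ m * \prod_(c : 'I_m) (csinh (mu (lift b c) - nu b) * csinh (nu (lift b c) - nu b)).
  rewrite -prodNo; apply: eq_bigr => c _.
  by rewrite -[nu b - mu _]opprB csinhN mulrN mulrC.
have EV : \prod_(k : 'I_m) csinh (xi (lift ord_max k) - nu b) =
   (-1) ^+ m * \prod_(k : 'I_m) csinh (nu b - xi (lift ord_max k)).
  rewrite -prodNo; apply: eq_bigr => c _.
  by rewrite -[xi _ - nu b]opprB csinhN.
have EA : \prod_(k : 'I_m) (csinh (mu b - xi (lift ord_max k)) * csinh (nu b - xi (lift ord_max k))) =
   \prod_(k : 'I_m) csinh (mu b - xi (lift ord_max k)) * \prod_(k : 'I_m) csinh (nu b - xi (lift ord_max k)).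
  by rewrite big_split.
rewrite EB EV EA (signr_addb _ (odd m) (odd b)) !signr_odd exprD.
move: (sign_sq m); move: ((-1) ^+ m) ((-1) ^+ b) => e sb E.
set A := \prod_(k : 'I_m) csinh (mu b - _).
set Bd := \prod_(c : 'I_m) _.
set Vs := \prod_(k : 'I_m) csinh (nu b - _).
move: N' V' A Bd Vs E => N' V' A Bd Vs E.
apply/eqP; rewrite subr_eq0; apply/eqP.
transitivity ((e * e) * (e * sb * A * Bd * N' * Vs * V')); first by ring.
by rewrite E mul1r; ring. }
move: (H0 (xi ord_max)); rewrite /f.
have -> : upd xi (xi ord_max) = xi.
  by apply: boolp.funext => k; rewrite /upd; case: eqP => [->|].
by move=> /eqP; rewrite subr_eq0 => /eqP.
Qed.
End S.

Set Implicit Arguments. Unset Strict Implicit.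
Import Order.TTheory GRing.Theory Num.Theory.
Local Open Scope ring_scope.
Local Open Scope complex_scope.
Section S.
Variable R : realType.
Local Notation C := (R[i]).

Lemma imagD (a b : R) : imag a + imag b = imag (a + b) :> C.
Proof. by rewrite /imag; apply/eqP; rewrite eq_complex /= addr0 !eqxx. Qed.
Lemma imagN (a : R) : - imag a = imag (- a) :> C.
Proof. by rewrite /imag; apply/eqP; rewrite eq_complex /= oppr0 !eqxx. Qed.
Lemma imag0 : imag 0 = 0 :> C.
Proof. by []. Qed.

Lemma ie_val (zeta : R) s m (j : 'I_m) :
  imag (eps R s j * zeta) = if (j < s)%N then - imag (zeta / 2%:R) else imag (zeta / 2%:R) :> C.
Proof.
rewrite /eps; case: ifP => _; last by rewrite mul1r mulrC.
by rewrite imagN mulNr mul1r mulrC.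
Qed.

Lemma imag_half (zeta : R) : imag zeta = imag (zeta / 2%:R) + imag (zeta / 2%:R) :> C.
Proof. by rewrite imagD; congr imag; field. Qed.

Lemma eps_sum (zeta : R) s m (j k : 'I_m) :
  imag ((eps R s j + eps R s k) * zeta) = imag (eps R s j * zeta) + imag (eps R s k * zeta) :> C.
Proof. by rewrite imagD mulrDl. Qed.
End S.

Section Main.
Variables (R : realType) (zeta : R) (m s : nat) (lam xi : 'I_m -> R[i]).
Local Notation C := (R[i]).
Hypothesis hlam : forall a b : 'I_m, a != b ->
     [/\ csinh (lam a - lam b) != 0,
         csinh (lam a - lam b + imag zeta) != 0,
         csinh (lam a - lam b - imag zeta) != 0 &
         csinh (xi a - xi b) != 0].
Hypothesis hxi : forall j k : 'I_m,
     csinh (lam j - xi k + imag (zeta / 2%:R)) != 0 /\ csinh (lam j - xi k - imag (zeta / 2%:R)) != 0.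

Let hz : C := imag (zeta / 2%:R).
Let ie (j : 'I_m) : C := if (j < s)%N then - hz else hz.
Let mu (j : 'I_m) : C := lam j + ie j.
Let nu (j : 'I_m) : C := lam j - ie j.

Lemma ie_eq j : imag (eps R s j * zeta) = ie j.
Proof. by rewrite ie_val. Qed.

Lemma imz : imag zeta = hz + hz :> C.
Proof. exact: imag_half. Qed.

Lemma Hnu : Hyp nu xi.
Proof.
split.
- move=> a b ab; have [h1 h2 h3 _] := hlam ab.
  rewrite /nu /ie; case: (a < s)%N; case: (b < s)%N.
  + by have -> : lam a - - hz - (lam b - - hz) = lam a - lam b by ring.
  + by have -> : lam a - - hz - (lam b - hz) = lam a - lam b + imag zeta by rewrite imz; ring.
  + by have -> : lam a - hz - (lam b - - hz) = lam a - lam b - imag zeta by rewrite imz; ring.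
  + by have -> : lam a - hz - (lam b - hz) = lam a - lam b by ring.
- move=> a k; destruct (hxi a k) as [h1 h2].
  rewrite /nu /ie. case: (a < s)%N => /=.
  + by rewrite (_ : lam a - - hz - xi k = lam a - xi k + hz); [exact: h1 | ring].
  + by rewrite (_ : lam a - hz - xi k = lam a - xi k - hz); [exact: h2 | ring].
- by move=> a b ab; have [_ _ _ h4] := hlam ab.
Qed.

Lemma Hmunu a b : a != b -> csinh (mu a - nu b) != 0.
Proof.
move=> ab; have [h1 h2 h3 _] := hlam ab.
rewrite /nu /mu /ie; case: (a < s)%N; case: (b < s)%N.
+ by have -> : lam a + - hz - (lam b - - hz) = lam a - lam b - imag zeta by rewrite imz; ring.
+ by have -> : lam a + - hz - (lam b - hz) = lam a - lam b by ring.
+ by have -> : lam a + hz - (lam b - - hz) = lam a - lam b by ring.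
+ by have -> : lam a + hz - (lam b - hz) = lam a - lam b + imag zeta by rewrite imz; ring.
Qed.

Lemma Hnumu a b : a != b -> csinh (nu a - mu b) != 0.
Proof.
move=> ab; rewrite -opprB csinhN oppr_eq0; apply: Hmunu; by rewrite eq_sym.
Qed.

Lemma sfac l x : csinh (mu l - x) * csinh (nu l - x) =
  csinh (lam l - x + imag (zeta / 2%:R)) * csinh (lam l - x - imag (zeta / 2%:R)).
Proof.
rewrite /mu /nu /ie -/hz; case: (l < s)%N.
  rewrite mulrC; congr (csinh _ * csinh _); ring.
congr (csinh _ * csinh _); ring.
Qed.

Lemma lt_neq (k j : 'I_m) : (k < j)%N -> k != j.
Proof. by move=> kj; apply/negP => /eqP e; rewrite e ltnn in kj. Qed.

Let Lam : C := \prod_(k : 'I_m) \prod_(j : 'I_m | (k < j)%N) csinh (lam j - lam k).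

Lemma Lam_neq0 : Lam != 0.
Proof.
apply/prodf_neq0 => k _; apply/prodf_neq0 => j kj.
have jk : j != k by rewrite eq_sym lt_neq.
by have [h _ _ _] := hlam jk.
Qed.

Lemma Vf_neq0 : Vf xi != 0.
Proof.
apply/prodf_neq0 => k _; apply/prodf_neq0 => j kj.
by have [_ _ _ h] := hlam (lt_neq kj).
Qed.

Lemma sin_neq0 : 0 < zeta < pi -> (sin zeta)%:C != 0 :> C.
Proof.
move=> hz0; have h := sin_gt0_pi hz0; rewrite -ltcR in h; exact: (lt0r_neq0 h).
Qed.

Lemma Z_eq : Zfun zeta lam xi = (sin zeta)%:C ^+ m * Nf mu nu xi / Lam.
Proof.
rewrite /Zfun.
pose S j k := csinh (lam j - xi k + imag (zeta / 2%:R)) * csinh (lam j - xi k - imag (zeta / 2%:R)).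
have Sne : forall j k, S j k != 0.
  by move=> j k; case: (hxi j k) => h1 h2; rewrite mulf_neq0.
have E1 : (\prod_(j : 'I_m) \prod_(k : 'I_m) S j k) * \det (Mmat zeta lam xi) =
          (sin zeta)%:C ^+ m * \det (Dmat mu nu xi).
  rewrite exchange_big /= mulrC.
  have -> : \prod_(k : 'I_m) \prod_(j : 'I_m) S j k = \det (diag_mx (\row_k \prod_(j : 'I_m) S j k)).
    by rewrite det_diag; apply: eq_bigr => k _; rewrite mxE.
  rewrite -det_mulmx -detZ; congr (\det _); apply/matrixP => j k.
  rewrite mul_mx_diag !mxE (bigD1 j) //=.
  under [in RHS]eq_bigr do rewrite sfac.
  rewrite -/(S j k); have := Sne j k; set P := \prod_(i | i != j) _.
  rewrite /S => h; field; by move: h; rewrite mulf_eq0 negb_or andbC.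
have E2 : \prod_(k : 'I_m) \prod_(j : 'I_m | (k < j)%N) (csinh (lam j - lam k) * csinh (xi k - xi j)) = Lam * Vf xi.
  by rewrite /Lam /Vf -big_split; apply: eq_bigr => k _; rewrite big_split.
move: E1; rewrite /S => E1; rewrite E2 mulrAC E1 -(core mu Hnu).
have := Lam_neq0; have := Vf_neq0; move: (Nf mu nu xi) (Vf xi) Lam => N V L hV hL.
field; by rewrite hV hL.
Qed.

Let W : C := \prod_(k : 'I_m) \prod_(j : 'I_m | (k < j)%N) (csinh (mu j - nu k) * csinh (nu j - mu k)).

Lemma W_neq0 : W != 0.
Proof.
apply/prodf_neq0 => k _; apply/prodf_neq0 => j kj.
have jk : j != k by rewrite eq_sym lt_neq.
by rewrite mulf_neq0 // ?Hmunu ?Hnumu.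
Qed.

Lemma g_sym (a b : 'I_m) : csinh (mu a - nu b) * csinh (nu a - mu b) = csinh (mu b - nu a) * csinh (nu b - mu a).
Proof. by rewrite -[mu a - nu b]opprB -[nu a - mu b]opprB !csinhN mulrNN mulrC. Qed.

Lemma G_eq : Gfun zeta s lam xi = ((s`! * (m - s)`!)%:R)^-1 * (Nf mu nu xi / W).
Proof.
rewrite /Gfun /Nf; congr (_ * _); rewrite big_distrl /=; apply: eq_bigr => σ _.
rewrite -mulrA; congr (_ * _).
rewrite /W -(@pair_prod_perm _ _ (fun a b => csinh (mu a - nu b) * csinh (nu a - mu b)) σ); last exact: g_sym.
rewrite -prodf_div; apply: eq_bigr => k _; rewrite -prodf_div; apply: eq_bigr => j kj.
have ab : σ j != σ k by rewrite (inj_eq perm_inj) eq_sym lt_neq.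
rewrite eps_sum !ie_eq.
have h3 := Hnumu ab; have h4 := Hmunu ab.
rewrite (_ : lam (σ j) - xi k + ie (σ j) = mu (σ j) - xi k); last by rewrite /mu; ring.
rewrite (_ : lam (σ k) - xi j - ie (σ k) = nu (σ k) - xi j); last by rewrite /nu; ring.
rewrite (_ : lam (σ j) - lam (σ k) + (ie (σ j) + ie (σ k)) = mu (σ j) - nu (σ k)); last by rewrite /mu /nu; ring.
move: h3 h4; set x3 := csinh (nu (σ j) - mu (σ k)); set x4 := csinh (mu (σ j) - nu (σ k)) => h3 h4.
by field; rewrite h3 h4.
Qed.

Lemma Gp_eq : Gpref zeta s lam = ((s`! * (m - s)`!)%:R)^-1 * (Lam / W).
Proof.
rewrite /Gpref; congr (_ * _); rewrite /Lam /W -prodf_div; apply: eq_bigr => k _.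
rewrite -prodf_div; apply: eq_bigr => j kj.
rewrite eps_sum !ie_eq; congr (_ / (csinh _ * csinh _)); rewrite /mu /nu; ring.
Qed.

Let T (k j : 'I_m) : C := csinh (lam j - lam k) / (csinh (mu j - nu k) * csinh (nu j - mu k)).
Let U (k j : 'I_m) : C := csinh (lam j - lam k) /
   (csinh (lam j - lam k + imag zeta) * csinh (lam j - lam k - imag zeta)).

Lemma T_low (k j : 'I_m) : (k < j)%N -> (j < s)%N -> T k j = U k j.
Proof.
move=> kj js; have ks : (k < s)%N by apply: ltn_trans js.
rewrite /T /U /mu /nu /ie ks js imz; congr (_ / _); rewrite mulrC; congr (csinh _ * csinh _); ring.
Qed.

Lemma T_high (k j : 'I_m) : (k < j)%N -> ~~ (k < s)%N -> T k j = U k j.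
Proof.
move=> kj ks; have js : ~~ (j < s)%N.
  by apply: contra ks => js; apply: ltn_trans js.
rewrite /T /U /mu /nu /ie (negPf ks) (negPf js) imz; congr (_ / (csinh _ * csinh _)); ring.
Qed.

Lemma T_mid (k j : 'I_m) : (k < s)%N -> (s <= j)%N -> T k j = (csinh (lam j - lam k))^-1.
Proof.
move=> ks sj; have kj : (k < j)%N by apply: leq_trans sj.
have jk : j != k by rewrite eq_sym lt_neq.
have [h _ _ _] := hlam jk.
rewrite /T /mu /nu /ie ks leqNgt in sj *; rewrite (negPf sj).
rewrite (_ : lam j + hz - (lam k - - hz) = lam j - lam k); last by ring.
rewrite (_ : lam j - hz - (lam k + - hz) = lam j - lam k); last by ring.
by field.
Qed.

Lemma Th_eq : Theta zeta s lam = Lam / W.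
Proof.
have -> : Lam / W = \prod_(k : 'I_m) \prod_(j : 'I_m | (k < j)%N) T k j.
  rewrite /Lam /W -prodf_div; apply: eq_bigr => k _; by rewrite -prodf_div.
rewrite /Theta.
under [RHS]eq_bigr => k _ do rewrite (bigID (fun j : 'I_m => (j < s)%N)) /=.
rewrite [RHS]big_split /= [X in _ = _ * X](bigID (fun k : 'I_m => (k < s)%N)) /=.
rewrite [RHS]mulrC; congr (_ * _ * _).
- apply: eq_big => [k|k ks]; first by [].
  rewrite [RHS](eq_bigl (fun j : 'I_m => (s <= j)%N)); last first.
    move=> j /=; rewrite -leqNgt; apply/andP/idP => [[]//|sj]; split=> //; exact: leq_trans ks sj.
  by apply: eq_bigr => j sj; rewrite T_mid.
- apply: eq_big => [k|k ks]; first by rewrite leqNgt.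
  rewrite [RHS](eq_bigl (fun j : 'I_m => (k < j)%N)); last first.
    move=> j /=; rewrite -leqNgt; apply/andP/idP => [[]//|kj]; split=> //; exact: leq_trans ks (ltnW kj).
  by apply: eq_bigr => j kj; rewrite T_high // -leqNgt.
- apply: eq_bigr => k _; apply: eq_bigr => j /andP [kj js].
  by rewrite T_low.
Qed.
End Main.

Unset Implicit Arguments. Set Strict Implicit.
Import Order.TTheory GRing.Theory Num.Theory.
Local Open Scope ring_scope.
Local Open Scope complex_scope.

Theorem mainTheorem4 (R : realType) (zeta : R) (m s : nat)
  (lam xi : 'I_m -> R[i]) :
  0 < zeta < pi -> (1 <= m)%N -> (s <= m)%N ->
  (* generic point: all denominators occurring in the formulas are nonzero *)
  (forall a b : 'I_m, a != b ->
     [/\ csinh (lam a - lam b) != 0,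
         csinh (lam a - lam b + imag zeta) != 0,
         csinh (lam a - lam b - imag zeta) != 0 &
         csinh (xi a - xi b) != 0]) ->
  (forall j k : 'I_m,
     csinh (lam j - xi k + imag (zeta / 2%:R)) != 0 /\
     csinh (lam j - xi k - imag (zeta / 2%:R)) != 0) ->
  Gtilde zeta s lam xi = ((sin zeta)%:C ^+ m)^-1 * Zfun zeta lam xi /\
  Gfun zeta s lam xi =
    (((s`! * (m - s)`!)%:R) * (sin zeta)%:C ^+ m)^-1 *
      Theta zeta s lam * Zfun zeta lam xi.
Proof.
move=> hz0 _ _ hlam hxi.
have hS := sin_neq0 hz0.
have hL := Lam_neq0 hlam.
have hW := W_neq0 s hlam.
have hc : ((s`! * (m - s)`!)%:R : R[i]) != 0 by rewrite pnatr_eq0 muln_eq0 negb_or -!lt0n !fact_gt0.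
rewrite /Gtilde (G_eq s hlam) (Gp_eq zeta s lam) (Z_eq s hlam hxi) (Th_eq s hlam).
move: hS hL hW hc.
move: ((sin zeta)%:C) (Nf _ _ _) (\prod_(k < m) _) (\prod_(k < m) _) ((s`! * (m - s)`!)%:R) => S N L W c hS hL hW hc.
split; field; by rewrite ?hS ?hL ?hW ?hc ?expf_neq0.
Qed.
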